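(* Let $\mu$ be a positive Borel measure on $\mathbb{R}^d$ such that $\mu(B)>0$ for every ball $B\subset\mathbb{R}^d$. Let $\Omega\subset\mathbb{R}^d$ be a bounded domain, $r:\Omega\to(0,+\infty)$ an admissible radius function in $\Omega$, and $0\leq\alpha<1$. Suppose $u,v\in C(\overline{\Omega})$ satisfy $T_\alpha u=u$ and $T_\alpha v=v$ in $\Omega$, and $u\leq v$ on $\partial\Omega$. Then $u\leq v$ in $\Omega$.
   Context: An admissible radius function in $\Omega$ is $r:\Omega\to(0,\infty)$ with $0<r(x)\leq\operatorname{dist}(x,\partial\Omega)$; $B_x=B(x,r(x))$ (open ball). For $x\in\Omega$: $Su(x)=\frac12(\sup_{B_x}u+\inf_{B_x}u)$, $Mu(x)=\frac{1}{\mu(B_x)}\int_{B_x}u\,d\mu$ (the measure $\mu$ is implicitly assumed finite on balls so that these averages are defined), and $T_\alpha=\alpha S+(1-\alpha)M$. *)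

(* Defs.v *)
From HB Require Import structures.
From mathcomp Require Import all_boot all_order all_algebra.
From mathcomp Require Import all_classical all_reals all_analysis.
Set Implicit Arguments. Unset Strict Implicit. Unset Printing Implicit Defensive.
Import Order.TTheory GRing.Theory Num.Theory.
Import numFieldNormedType.Exports.
Local Open Scope classical_set_scope.
Local Open Scope ring_scope.

(* R^d is modelled as 'rV[R]_d (its product topology is the Euclidean one). *)

Definition borelRd (R : realType) (d : nat) :=
  g_sigma_algebraType (@open 'rV[R]_d).

Definition edist (R : realType) (d : nat) (x y : 'rV[R]_d) : R :=
  Num.sqrt (\sum_(i < d) (x ord0 i - y ord0 i) ^+ 2).

Definition eball (R : realType) (d : nat) (x : 'rV[R]_d) (rho : R) : set 'rV[R]_d :=
  [set y | edist x y < rho].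

Definition bdry (R : realType) (d : nat) (A : set 'rV[R]_d) : set 'rV[R]_d :=
  closure A `\` interior A.

Definition dist_set (R : realType) (d : nat) (x : 'rV[R]_d) (A : set 'rV[R]_d) : R :=
  inf [set edist x y | y in A].

Definition bounded_domain (R : realType) (d : nat) (O : set 'rV[R]_d) : Prop :=
  O !=set0 /\ open O /\ connected O /\
  exists M : R, forall x, O x -> edist 0 x <= M.

Definition admissible (R : realType) (d : nat) (O : set 'rV[R]_d) (r : 'rV[R]_d -> R) : Prop :=
  forall x, O x -> 0 < r x /\ r x <= dist_set x (bdry O).

Definition Sop (R : realType) (d : nat) (r : 'rV[R]_d -> R) (u : 'rV[R]_d -> R)
  (x : 'rV[R]_d) : R :=
  (sup [set u y | y in eball x (r x)] + inf [set u y | y in eball x (r x)]) / 2.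

Definition Mop (R : realType) (d : nat)
  (mu : {measure set (borelRd R d) -> \bar R}) (r : 'rV[R]_d -> R)
  (u : 'rV[R]_d -> R) (x : 'rV[R]_d) : R :=
  Rintegral mu (eball x (r x) : set (borelRd R d)) u /
  fine (mu (eball x (r x) : set (borelRd R d))) .

Definition Talpha (R : realType) (d : nat)
  (mu : {measure set (borelRd R d) -> \bar R}) (r : 'rV[R]_d -> R) (alpha : R)
  (u : 'rV[R]_d -> R) (x : 'rV[R]_d) : R :=
  alpha * Sop r u x + (1 - alpha) * Mop mu r u x.

(* Main.v *)
Require Import Defs.
From HB Require Import structures.
From mathcomp Require Import all_boot all_order all_algebra.
From mathcomp Require Import all_classical all_reals all_analysis.
Import Order.TTheory GRing.Theory Num.Theory.
Import numFieldNormedType.Exports.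
Local Open Scope classical_set_scope.
Local Open Scope ring_scope.
From mathcomp Require Import ring lra.

Section Helpers.
Set Implicit Arguments.
Variables (R : realType) (d : nat).
Implicit Types (x y z : 'rV[R]_d).
Local Notation edist := Defs.edist.

Lemma edist_ge0 x y : 0 <= edist x y.
Proof. exact: sqrtr_ge0. Qed.

Lemma edist_coord x y i : `|x ord0 i - y ord0 i| <= edist x y.
Proof.
rewrite /edist -sqrtr_sqr ler_wsqrtr // (bigD1 i) //= lerDl.
by apply: sumr_ge0 => j _; exact: sqr_ge0.
Qed.

Lemma edistxx x : edist x x = 0.
Proof. by rewrite /edist big1 ?sqrtr0 // => i _; rewrite subrr expr0n. Qed.

Lemma sum_cont (I : eqType) (s : seq I) (f : I -> 'rV[R]_d -> R) :
  (forall i, continuous (f i)) -> continuous (fun z => \sum_(i <- s) f i z).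
Proof.
move=> cf; elim: s => [|i s IH].
  by under eq_fun do rewrite big_nil; exact: cst_continuous.
under eq_fun do rewrite big_cons.
by move=> z; apply: continuousD; [exact: cf | exact: IH].
Qed.

Lemma edist_cont x : continuous (edist x).
Proof.
move=> z; apply: (@continuous_comp _ _ _ (fun z => \sum_(i < d) (x ord0 i - z ord0 i) ^+ 2) (@Num.sqrt R)); last exact: sqrt_continuous.
suff hc : continuous (fun z : 'rV[R]_d => \sum_(i <- index_enum 'I_d) (x ord0 i - z ord0 i) ^+ 2) by exact: hc.
apply: (@sum_cont _ (index_enum 'I_d) (fun i z => (x ord0 i - z ord0 i) ^+ 2)) => i y.
have h : {for y, continuous (fun z : 'rV[R]_d => x ord0 i - z ord0 i)}.
  apply: continuousB; first exact: cst_continuous.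
  exact: (@coord_continuous R 1 d ord0 i).
under eq_fun do rewrite expr2.
exact: (continuousM h h).
Qed.

Lemma eball_open x e : open (eball x e).
Proof.
have -> : eball x e = edist x @^-1` [set t | t < e] by [].
apply: open_comp; last exact: open_lt.
by move=> z _; exact: edist_cont.
Qed.

Lemma ball_coords (y z : 'rV[R]_d) e : 0 < e ->
  (forall i, `|y ord0 i - z ord0 i| < e) -> ball y e z.
Proof.
move=> e0 h; rewrite -ball_normE /ball_ /= [X in X < _]/Num.Def.normr /= mx_normrE.
apply/bigmax_ltP; split => //= -[i j] _ /=.
by rewrite (ord1 i) !mxE.
Qed.

Lemma nbhs_eball y (N : set 'rV[R]_d) : nbhs y N -> exists2 e, 0 < e & eball y e `<=` N.
Proof.
move/nbhs_ballP => [e e0 sub]; exists e => // z yz; apply: sub.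
by apply: ball_coords => // i; exact: le_lt_trans (edist_coord _ _ _) yz.
Qed.

Lemma eball_center x e : 0 < e -> eball x e x.
Proof. by rewrite /eball /= edistxx. Qed.

Lemma edist_seg x y t : 0 <= t -> edist x (x + t *: (y - x)) = t * edist x y.
Proof.
move=> t0; rewrite /edist.
have -> : \sum_(i < d) (x ord0 i - (x + t *: (y - x)) ord0 i) ^+ 2 =
   t ^+ 2 * \sum_(i < d) (x ord0 i - y ord0 i) ^+ 2.
  rewrite mulr_sumr; apply: eq_bigr => i _; rewrite !mxE; ring.
by rewrite sqrtrM ?sqr_ge0 // sqrtr_sqr ger0_norm.
Qed.


Lemma closure_not_in (O : set 'rV[R]_d) z : closure O z -> ~ O z -> bdry O z.
Proof. by move=> cz nz; split => // /interior_subset. Qed.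

Lemma bdry_far (O : set 'rV[R]_d) (r : 'rV[R]_d -> R) x b :
  admissible O r -> O x -> bdry O b -> r x <= edist x b.
Proof.
move=> hr Ox bb; have [_ h] := hr x Ox; apply: (le_trans h).
rewrite /dist_set; apply: ge_inf; last by exists b.
by exists 0 => _ [y _ <-]; exact: edist_ge0.
Qed.

Lemma ball_in (O : set 'rV[R]_d) (r : 'rV[R]_d -> R) x y :
  open O -> admissible O r -> O x -> eball x (r x) y -> O y.
Proof.
move=> oO hr Ox xy.
have cl z : closure O z -> edist x z < r x -> O z.
  move=> cz xz; apply/not_notP => nz.
  have := @bdry_far O r x z hr Ox (@closure_not_in O z cz nz).
  by rewrite leNgt xz.
pose g := fun t : R => x + t *: (y - x).
have cg : continuous g.
  move=> t; rewrite /g; apply: cvgD; first exact: cvg_cst.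
  exact: scalel_continuous.
pose S := [set g t | t in `[0, 1]%classic].
have Sd z : S z -> edist x z < r x.
  move=> [t /= t01 <-]; rewrite /g edist_seg; last first.
    by move: t01; rewrite in_itv /= => /andP[].
  move: t01; rewrite in_itv /= => /andP[t0 t1].
  have xy' : edist x y < r x := xy.
  apply: le_lt_trans xy'.
  by rewrite ler_piMl // edist_ge0.
have conS : connected S.
  apply: connected_continuous_connected; first exact: segment_connected.
  exact: continuous_subspaceT.
have h : S `&` O = S.
  apply: conS.
  - exists x; split => //; exists 0; first by rewrite /= in_itv /= lexx ler01.
    by rewrite /g scale0r addr0.
  - by exists O.
  - exists (closure O); first exact: closed_closure.
    apply/seteqP; split => z [Sz Oz]; split => //.
      exact: subset_closure.
    exact: cl Oz (Sd z Sz).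
have Sy : S y.
  exists 1; first by rewrite /= in_itv /= lexx ler01.
  by rewrite /g scale1r addrC subrK.
by rewrite -h in Sy; case: Sy.
Qed.

End Helpers.
Arguments edist_ge0 {R d}. Arguments edist_coord {R d}. Arguments edistxx {R d}.
Arguments edist_cont {R d}. Arguments eball_open {R d}. Arguments nbhs_eball {R d}.
Arguments eball_center {R d}. Arguments edist_seg {R d}. Arguments closure_not_in {R d}.
Arguments bdry_far {R d}. Arguments ball_in {R d}.
Lemma integ_ball (R : realType) (d : nat) (mu : {measure set (borelRd R d) -> \bar R})
  (B : set 'rV[R]_d) (f : 'rV[R]_d -> R) : open B ->
  (mu (B : set (borelRd R d)) < +oo)%E -> {in B, continuous f} ->
  (exists M, forall z, B z -> `|f z| <= M) ->
  mu.-integrable (B : set (borelRd R d)) (EFin \o f).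
Proof.
move=> oB Bfin cf [M hM].
have mB : measurable (B : set (borelRd R d)) by apply: sub_sigma_algebra.
apply: measurable_bounded_integrable => //.
  apply: (measurability _ (measurable_realfun.RGenOpens.measurableE R)).
  move=> _ [_ [a [b ->]] <-]; apply: sub_sigma_algebra.
  move=> z /= [Bz Iz]; apply: filterI; first exact: oB.
  apply: (cf z (mem_set Bz)).
  by apply: interval_open.
exists M; split; first exact: num_real.
by move=> M' MM' z Bz; apply: le_trans (hM z Bz) (ltW MM').
Qed.

Theorem proposition4p1 (R : realType) (d : nat)
  (mu : {measure set (borelRd R d) -> \bar R})
  (mu_ball_pos : forall (x : 'rV[R]_d) (rho : R), 0 < rho ->
     (0 < mu (eball x rho : set (borelRd R d)))%E)
  (mu_ball_fin : forall (x : 'rV[R]_d) (rho : R), 0 < rho ->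
     (mu (eball x rho : set (borelRd R d)) < +oo)%E)
  (Omega : set 'rV[R]_d) (hOmega : bounded_domain Omega)
  (r : 'rV[R]_d -> R) (hr : admissible Omega r)
  (alpha : R) (halpha : 0 <= alpha < 1)
  (u v : 'rV[R]_d -> R)
  (hu : {within closure Omega, continuous u})
  (hv : {within closure Omega, continuous v})
  (Tu : forall x, Omega x -> Talpha mu r alpha u x = u x)
  (Tv : forall x, Omega x -> Talpha mu r alpha v x = v x)
  (hbd : forall x, bdry Omega x -> u x <= v x) :
  forall x, Omega x -> u x <= v x.
Proof.
move=> x0 Ox0.
have [[xO OxO] [oO [cO [Mb hMb]]]] := hOmega.
set K := closure Omega.
have OK : Omega `<=` K := @subset_closure _ Omega.
have Mb0 : 0 <= Mb := le_trans (edist_ge0 _ _) (hMb xO OxO).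
have Kb : K `<=` [set z | `|z| <= Mb].
  have -> : [set z : 'rV[R]_d | `|z| <= Mb] = closure [set z : 'rV[R]_d | `|z| <= Mb].
    apply/closure_id.
    have -> : [set z : 'rV[R]_d | `|z| <= Mb] = (Num.Def.normr : 'rV[R]_d -> R) @^-1` [set t | t <= Mb] by [].
    apply: closed_comp; first by move=> z _; exact: norm_continuous.
    exact: closed_le.
  apply: closure_subset => z Oz /=.
  rewrite [X in X <= _]/Num.Def.normr /= mx_normrE.
  apply/bigmax_leP; split => //= -[i j] _ /=.
  rewrite (ord1 i); apply: le_trans (hMb z Oz).
  by have := edist_coord 0 z j; rewrite mxE sub0r normrN.
have Kc : compact K.
  apply: bounded_closed_compact; last exact: closed_closure.
  exists Mb; split; first exact: num_real.
  by move=> M MbM z Kz; apply: le_trans (Kb z Kz) (ltW MbM).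
have K0 : K !=set0 by exists xO; exact: OK.
pose w := fun z => u z - v z.
have hw : {within K, continuous w}.
  by move=> z; apply: cvgB; [exact: hu | exact: hv].
have [c cK cmax] := EVT_max_rV K0 Kc hw.
have [uM _ huM] := EVT_max_rV K0 Kc hu.
have [um _ hum] := EVT_min_rV K0 Kc hu.
have [vM _ hvM] := EVT_max_rV K0 Kc hv.
have [vm _ hvm] := EVT_min_rV K0 Kc hv.
set Mx := w c.
have wle z : K z -> w z <= Mx := fun Kz => cmax z (mem_set Kz).
have cinO (f : 'rV[R]_d -> R) : {within K, continuous f} -> {in Omega, continuous f}.
  move=> hf; rewrite -(continuous_open_subspace f oO).
  exact: continuous_subspaceW OK hf.
rewrite leNgt; apply/negP => hx0.
have Mx0 : 0 < Mx.
  by apply: lt_le_trans (wle x0 (OK _ Ox0)); rewrite /w subr_gt0.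
have Oc : Omega c.
  apply/not_notP => nc.
  have := hbd c (closure_not_in Omega c (set_mem cK) nc).
  by rewrite -subr_le0 -/(w c) -/Mx leNgt Mx0.
have key : forall p, Omega p -> w p = Mx -> forall y, eball p (r p) y -> w y = Mx.
  move=> p Op wp.
  have rp : 0 < r p := (hr p Op).1.
  set B := eball p (r p).
  have BO : B `<=` Omega := fun y => ball_in Omega r p y oO hr Op.
  have BK : B `<=` K := fun y By => OK _ (BO y By).
  have oB : open B := eball_open p (r p).
  have mB : measurable (B : set (borelRd R d)) by apply: sub_sigma_algebra.
  have muB0 := mu_ball_pos p (r p) rp.
  have muBf := mu_ball_fin p (r p) rp.
  set m := fine (mu (B : set (borelRd R d))).
  have m0 : 0 < m by apply: fine_gt0; rewrite muB0 muBf.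
  have cB (f : 'rV[R]_d -> R) : {within K, continuous f} -> {in B, continuous f}.
    by move=> hf z Bz; apply: (cinO f hf z); apply: mem_set; apply: BO; exact: set_mem.
  have bd (f : 'rV[R]_d -> R) fm fM : (forall z, K z -> f fm <= f z <= f fM) ->
      forall z, B z -> `|f z| <= `|f fM| + `|f fm|.
    move=> h z Bz; have /andP[h1 h2] := h z (BK z Bz).
    have a1 := ler_norm (f fM); have a2 : - f fm <= `|f fm| by rewrite -normrN ler_norm.
    have a3 := normr_ge0 (f fM); have a4 := normr_ge0 (f fm).
    by rewrite ler_norml; apply/andP; split; lra.
  have bu z : B z -> `|u z| <= `|u uM| + `|u um|.
    by apply: bd => t Kt; rewrite huM ?hum ?mem_set.
  have bv z : B z -> `|v z| <= `|v vM| + `|v vm|.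
    by apply: bd => t Kt; rewrite hvM ?hvm ?mem_set.
  have iu := @integ_ball R d mu B u oB muBf (cB u hu) (ex_intro _ _ bu).
  have iv := @integ_ball R d mu B v oB muBf (cB v hv) (ex_intro _ _ bv).
  have bw z : B z -> `|w z| <= (`|u uM| + `|u um|) + (`|v vM| + `|v vm|).
    move=> Bz; have := bu z Bz; have := bv z Bz; rewrite /w !ler_norml.
    by move=> /andP[? ?] /andP[? ?]; apply/andP; split; lra.
  have iw := @integ_ball R d mu B w oB muBf (cB w hw) (ex_intro _ _ bw).
  have ic : mu.-integrable (B : set (borelRd R d)) (EFin \o (fun=> Mx)).
    apply: integ_ball => //; last by exists `|Mx|.
    by move=> z _; exact: cst_continuous.
  pose g := fun z => Mx - w z.
  have ig : mu.-integrable (B : set (borelRd R d)) (EFin \o g).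
    apply: integ_ball => //.
      move=> z Bz; rewrite /g.
      have hwz := cB w hw z Bz.
      exact: (cvgB (cvg_cst Mx) hwz).
    exists (`|Mx| + ((`|u uM| + `|u um|) + (`|v vM| + `|v vm|))) => z Bz.
    by rewrite /g; apply: le_trans (ler_normB _ _) _; rewrite lerD2l bw.
  have hI : \int[mu]_(z in (B : set (borelRd R d))) g z =
      Mx * m - (\int[mu]_(z in (B : set (borelRd R d))) u z -
                \int[mu]_(z in (B : set (borelRd R d))) v z).
    rewrite /g RintegralB // Rintegral_cst //.
    by rewrite /w RintegralB.
  have Bp : B p := eball_center p (r p) rp.
  have hS : Sop r u p - Sop r v p <= Mx.
    rewrite /Sop -/B.
    set U := [set u y | y in B]; set V := [set v y | y in B].
    have U0 : U !=set0 by exists (u p), p.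
    have V0 : V !=set0 by exists (v p), p.
    have hsV : has_sup V.
      split => //; exists (v vM) => _ [y By <-]; apply: hvM; apply: mem_set; exact: BK.
    have hiU : has_lbound U.
      by exists (u um) => _ [y By <-]; apply: hum; apply: mem_set; exact: BK.
    have h1 : sup U <= sup V + Mx.
      apply: ge_sup => // _ [y By <-].
      have := wle y (BK y By); rewrite /w => hy.
      have : v y <= sup V by apply: sup_upper_bound => //; exists y.
      lra.
    have h2 : inf U - Mx <= inf V.
      apply: lb_le_inf => // _ [y By <-].
      have := wle y (BK y By); rewrite /w => hy.
      have : inf U <= u y by apply: ge_inf => //; exists y.
      lra.
    lra.
  have hpos : forall y, B y -> w y < Mx -> 0 < \int[mu]_(z in (B : set (borelRd R d))) g z.
    move=> y By wy.
    pose eps := (Mx - w y) / 2.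
    have eps0 : 0 < eps by rewrite /eps divr_gt0 // subr_gt0.
    have nN : nbhs y (B `&` [set z | w z < w y + eps]).
      apply: filterI; first exact: oB.
      have hn : nbhs (w y) [set t | t < w y + eps] by apply: open_lt; rewrite /= ltrDl.
      exact: (cB w hw y (mem_set By) _ hn).
    have [de de0 sub] := nbhs_eball y _ nN.
    set Bs := eball y de.
    have mBs : measurable (Bs : set (borelRd R d)) by apply: sub_sigma_algebra; exact: eball_open.
    have muBs := mu_ball_pos y de de0.
    have BsB : Bs `<=` B by move=> z /sub [].
    have mG := measurable_int mu ig.
    have I1 := ge0_subset_integral mu mBs mB mG _ BsB.
    have I2 : (\int[mu]_(z in (Bs : set (borelRd R d))) (cst eps%:E) z <=
               \int[mu]_(z in (Bs : set (borelRd R d))) (EFin \o g) z)%E.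
      apply: ge0_le_integral => //.
      - by move=> z _; rewrite lee_fin ltW.
      - exact: measurable_funS mB BsB mG.
      - move=> z /sub [_ /= hz]; rewrite lee_fin /g.
        have : Mx - w y = 2 * eps by rewrite /eps mulrC divfK.
        lra.
    rewrite integral_cst // in I2.
    have ng : forall z, B z -> (0%R <= (EFin \o g) z)%E.
      by move=> z Bz; rewrite lee_fin /g subr_ge0; exact: wle z (BK z Bz).
    have := le_trans I2 (I1 ng).
    rewrite -lte_fin /Rintegral fineK ?integrable_fin_num //.
    apply: lt_le_trans; apply: mule_gt0 => //; rewrite lte_fin //.
  move=> y By; apply/eqP; rewrite eq_le wle /=; last exact: BK.
  rewrite leNgt; apply/negP => wy.
  have := hpos y By wy; rewrite hI.
  have TU := Tu p Op; have TV := Tv p Op.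
  move: TU TV; rewrite /Talpha /Mop -/B -/m.
  set SU := Sop r u p; set SV := Sop r v p.
  set Iu := \int[mu]_(z in (B : set (borelRd R d))) u z.
  set Iv := \int[mu]_(z in (B : set (borelRd R d))) v z.
  move=> TU TV.
  have eqD : Mx = alpha * (SU - SV) + (1 - alpha) * ((Iu - Iv) / m).
    by rewrite -wp /w -TU -TV; ring.
  set D := (Iu - Iv) / m in eqD.
  have hID : Iu - Iv = D * m by rewrite /D divfK // gt_eqF.
  have a1 : 0 < 1 - alpha by case/andP: halpha => _ h; rewrite subr_gt0.
  have a0 : 0 <= alpha by case/andP: halpha.
  have hh : 0 <= alpha * (Mx - (SU - SV)) by apply: mulr_ge0 => //; rewrite subr_ge0.
  have hD : 0 <= (1 - alpha) * (D - Mx) by nra.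
  rewrite pmulr_rge0 // subr_ge0 in hD.
  rewrite hID; nra.
pose A := [set p | Omega p /\ w p = Mx].
have AO : A = Omega.
  apply: cO.
  - by exists c.
  - exists A; last by apply/seteqP; split => z [] //.
    move=> p [Op wp].
    have rp : 0 < (r p) := (hr p Op).1.
    have : nbhs p (eball p (r p)) by apply: (eball_open p (r p)); exact: eball_center.
    apply: filterS => y py; split; first exact: (ball_in Omega r p y oO hr Op py).
    exact: key py.
  - exists (closure A); first exact: closed_closure.
    apply/seteqP; split => z.
      by move=> Az; split; [case: Az|exact: subset_closure].
    move=> [Oz clz]; split => //.
    apply/eqP; rewrite eq_le wle /=; last exact: OK.
    rewrite leNgt; apply/negP => wz.
    have : nbhs z (w @^-1` [set t | t < Mx]).
      by apply: (cinO w hw z (mem_set Oz)); exact: open_lt.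
    move=> /clz [q [[_ wq] /= qlt]].
    by move: qlt; rewrite wq ltxx.
have [b bb] : exists b, bdry Omega b.
  apply/not_existsP => nb.
  have [r0 rle] := hr c Oc.
  have h0 : [set Defs.edist c y | y in bdry Omega] = set0.
    by apply/seteqP; split => // z [y yb _]; case: (nb y yb).
  by move: rle; rewrite /dist_set h0 inf0 leNgt r0.
have := (subspace_continuousP _ _).1 hw b bb.1 [set t | t < Mx].
have wb : w b < Mx by apply: le_lt_trans Mx0; rewrite /w subr_le0; exact: hbd.
have nbw : nbhs (w b) [set t | t < Mx] by exact: open_lt.
move=> /(_ nbw) /= hnb.
have [q [Oq /= qlt]] := bb.1 _ hnb.
have : w q = Mx by rewrite -AO in Oq; case: Oq.
move=> wq; have := qlt (OK _ Oq).
by rewrite /from_subspace /= wq ltxx.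
Qed.
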